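(* Let $k\ge1$ and $b_1,\dots,b_k\in\mathbb{F}_q$, and set $(a_1,\dots,a_k):=G(b_1,\dots,b_k)$. Then, as permutations of $\mathbb{P}^1(\mathbb{F}_q)$, $$(b_1,\infty)\circ(b_2,\infty)\circ\cdots\circ(b_k,\infty)=\mu(x)\circ x^{q-2}\circ(x-a_k)\circ x^{q-2}\circ(x-a_{k-1})\circ\cdots\circ x^{q-2}\circ(x-a_1),$$ where $\mu(x):=(x+a_1)\circ x^{-1}\circ(x+a_2)\circ x^{-1}\circ\cdots\circ(x+a_k)\circ x^{-1}$, which is a degree-one rational function in $\mathbb{F}_q(x)$.
   Context: Let $q>2$ be a prime power, $\mathbb{F}_q$ the field with $q$ elements, $\mathbb{P}^1(\mathbb{F}_q)=\mathbb{F}_q\cup\{\infty\}$. Degree-one rational functions in $\mathbb{F}_q(x)$ act on $\mathbb{P}^1(\mathbb{F}_q)$ with the usual conventions (e.g. $x^{-1}$ swaps $0$ and $\infty$, polynomials fix $\infty$). $x^{q-2}$ acts on $\mathbb{P}^1(\mathbb{F}_q)$ by fixing $0$ and $\infty$ and sending $c\in\mathbb{F}_q^*$ to $c^{q-2}=c^{-1}$; for $c\in\mathbb{F}_q$, $c^{q-2}$ also denotes the field element ($0^{q-2}=0$). For $b\in\mathbb{F}_q$, $(b,\infty)$ is the transposition swapping $b$ and $\infty$. Composition is $(f\circ g)(x)=f(g(x))$. For $2\le\ell\le k$ let $\Phi_\ell:\mathbb{F}_q^\ell\to\mathbb{F}_q^{\ell-1}$ send $(e_1,\dots,e_\ell)$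 to $((e_2-e_1)^{q-2},(e_3-e_1)^{q-2},\dots,(e_\ell-e_1)^{q-2})$. The map $G:\mathbb{F}_q^k\to\mathbb{F}_q^k$ sends $(b_1,\dots,b_k)$ to $(a_1,\dots,a_k)$ where $a_i$ is the first entry of $\Phi_{k-i+2}\circ\Phi_{k-i+3}\circ\cdots\circ\Phi_k(b_1,\dots,b_k)\in\mathbb{F}_q^{k-i+1}$ (for $i=1$ this composite is the identity, so $a_1=b_1$). *)

(* Defs.v *)
From HB Require Import structures.
From mathcomp Require Import all_boot all_order all_algebra.
Set Implicit Arguments. Unset Strict Implicit. Unset Printing Implicit Defensive.
Import GRing.Theory.
Local Open Scope ring_scope.

(* P^1(F) is modelled as option F : [None] is the point at infinity. *)
Definition P1 (F : finFieldType) := option F.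

Section Defs.
Variable F : finFieldType.

Definition qF : nat := #|F|.

Definition transpInf (b : F) (x : P1 F) : P1 F :=
  match x with
  | None => Some b
  | Some c => if c == b then None else Some c
  end.

Definition addP (a : F) (x : P1 F) : P1 F :=
  match x with None => None | Some c => Some (c + a) end.

Definition subP (a : F) (x : P1 F) : P1 F :=
  match x with None => None | Some c => Some (c - a) end.

Definition powq2 (x : P1 F) : P1 F :=
  match x with None => None | Some c => Some (c ^+ (qF - 2)) end.

Definition invP (x : P1 F) : P1 F :=
  match x with
  | None => Some 0
  | Some c => if c == 0 then None else Some c^-1
  end.

(* action of the degree-one rational function (a x + b)/(c x + d), ad - bc != 0 *)
Definition mobius (a b c d : F) (x : P1 F) : P1 F :=
  match x with
  | None => if c == 0 then None else Some (a / c)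
  | Some t => if c * t + d == 0 then None else Some ((a * t + b) / (c * t + d))
  end.

Definition Phi (e : seq F) : seq F :=
  match e with
  | [::] => [::]
  | e1 :: es => [seq (ei - e1) ^+ (qF - 2) | ei <- es]
  end.

(* G(b_1..b_k) = (a_1..a_k), a_{i+1} = first entry of Phi^i(b) (0-based i) *)
Definition Gmap (b : seq F) : seq F :=
  mkseq (fun i => head 0 (iter i Phi b)) (size b).

Definition lhs_perm (b : seq F) : P1 F -> P1 F :=
  foldr (fun bi f => transpInf bi \o f) id b.

Definition mu (a : seq F) : P1 F -> P1 F :=
  foldr (fun ai f => addP ai \o invP \o f) id a.

Definition rhs_tail (a : seq F) : P1 F -> P1 F :=
  foldl (fun f ai => (powq2 \o subP ai) \o f) id a.

End Defs.

(* Main.v *)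
Require Import Defs.
From HB Require Import structures.
From mathcomp Require Import all_boot all_order all_algebra all_field.
From mathcomp Require Import ring.
Import GRing.Theory.
Local Open Scope ring_scope.

Section Aux.
Variable F : finFieldType.
Hypothesis HF : (2 < #|F|)%N.

Lemma expq2 (u : F) : u ^+ (qF F - 2) = u^-1.
Proof.
have n0 : (0 < qF F - 2)%N by rewrite /qF; case: #|F| HF => [|[|[|m]]].
have [->|nz] := eqVneq u 0; first by rewrite expr0n eqn0Ngt n0 invr0.
have h : u ^+ (qF F - 2) * u * u = 1 * u.
  by rewrite mul1r -mulrA -expr2 -exprD subnK ?expf_card // /qF; apply: ltnW.
have h' := mulIf nz h.
by rewrite -[u ^+ _]mulr1 -(mulfV nz) mulrA h' mul1r.
Qed.

Lemma conj_lhs (b1 : F) (s : seq F) (x : P1 F) :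
  lhs_perm [seq (e - b1) ^+ (qF F - 2) | e <- s] (powq2 (subP b1 x))
  = powq2 (subP b1 (lhs_perm s x)).
Proof.
elim: s => [|e s IH] //=. rewrite IH.
case: (lhs_perm s x) => [c|] /=; last by rewrite !expq2.
rewrite !expq2.
have [->|ne] := eqVneq c e; first by rewrite eqxx.
rewrite ifF /= ?expq2 //. apply: negbTE; apply: contra ne => /eqP /invr_inj /eqP.
by rewrite (can_eq (subrK b1)).
Qed.

Lemma step (b1 : F) (y : P1 F) :
  transpInf b1 y = addP b1 (invP (powq2 (subP b1 y))).
Proof.
case: y => [c|] /=; last by rewrite add0r.
rewrite expq2.
have [->|ne] := eqVneq c b1; first by rewrite subrr invr0 eqxx.
have nz : c - b1 != 0 by rewrite subr_eq0.
rewrite invr_eq0 (negbTE nz) invrK. by rewrite /= subrK.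
Qed.

Lemma rhs_gen (s : seq F) (f : P1 F -> P1 F) (x : P1 F) :
  foldl (fun f ai => (@powq2 F \o @subP F ai) \o f) f s x = rhs_tail s (f x).
Proof.
elim: s f x => [|a s IH] f x //=.
by rewrite /rhs_tail /= IH [in RHS]IH.
Qed.

Lemma rhs_cons (a : F) (s : seq F) (x : P1 F) :
  rhs_tail (a :: s) x = rhs_tail s (powq2 (subP a x)).
Proof. by rewrite /rhs_tail /= rhs_gen. Qed.

Lemma Gmap_cons (b1 : F) (s : seq F) :
  Gmap (b1 :: s) = b1 :: Gmap (Phi (b1 :: s)).
Proof.
rewrite /Gmap /mkseq /= size_map -add1n iotaDl -map_comp.
congr (_ :: _); apply: eq_map => i /=.
by rewrite add0n -iterS iterSr.
Qed.

Lemma mu_cons (a : F) s x : mu (a :: s) x = addP a (invP (mu s x)).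
Proof. by []. Qed.

Lemma part1 (n : nat) (b : seq F) : size b = n ->
  forall x, lhs_perm b x = mu (Gmap b) (rhs_tail (Gmap b) x).
Proof.
elim: n b => [|n IH] [|b1 s] // [hs] x.
rewrite Gmap_cons rhs_cons mu_cons -IH; last by rewrite size_map.
rewrite conj_lhs -step; done.
Qed.

Lemma part2 (a : seq F) : exists a0 b0 c0 d0 : F, a0 * d0 - b0 * c0 != 0 /\
     forall x : P1 F, mu a x = mobius a0 b0 c0 d0 x.
Proof.
elim: a => [|a s [A [B [C [D [det IH]]]]]].
  exists 1, 0, 0, 1; split; first by rewrite mulr1 mul0r subr0 oner_eq0.
  case=> [t|] //=; by rewrite !(mul0r, add0r, mul1r, addr0, divr1, oner_eq0, eqxx).
exists (C + a * A), (D + a * B), A, B; split.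
  have -> : (C + a * A) * B - (D + a * B) * A = - (A * D - B * C) by ring.
  by rewrite oppr_eq0.
move=> x; rewrite mu_cons IH.
have AC : C == 0 -> A != 0.
  move/eqP=> C0; apply: contra det => /eqP A0; by rewrite A0 C0; apply/eqP; ring.
have both : forall t, C * t + D == 0 -> A * t + B != 0.
  move=> t /eqP h1; apply: contra det => /eqP h2.
  have -> : D = - (C * t) by apply/eqP; rewrite -addr_eq0 addrC h1.
  have -> : B = - (A * t) by apply/eqP; rewrite -addr_eq0 addrC h2.
  by apply/eqP; ring.
case: x => [t|] /=.
- have e : (C + a * A) * t + (D + a * B) = (C * t + D) + a * (A * t + B) by ring.
  rewrite e.
  have [h|h] := eqVneq (C * t + D) 0.
    have h2 := both t (introT eqP h).
    by rewrite h /= (negbTE h2) !add0r mulfK.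
  rewrite /= mulf_eq0 invr_eq0 (negbTE h) orbF.
  have [h2|h2] := eqVneq (A * t + B) 0; first by [].
  by rewrite /= invf_div; congr Some; rewrite [RHS]mulrDl mulfK.
- have [h|h] := eqVneq C 0.
    have h2 := AC (introT eqP h).
    by rewrite /= (negbTE h2) h !add0r mulfK.
  rewrite /= mulf_eq0 invr_eq0 (negbTE h) orbF.
  have [h2|h2] := eqVneq A 0; first by [].
  by rewrite /= invf_div; congr Some; rewrite [RHS]mulrDl mulfK.
Qed.

End Aux.

Theorem theorem3p3 (F : finFieldType) (b : seq F) :
  (2 < #|F|)%N -> (0 < size b)%N ->
  (forall x : P1 F, lhs_perm b x = (mu (Gmap b) \o rhs_tail (Gmap b)) x) /\
  (exists a0 b0 c0 d0 : F, a0 * d0 - b0 * c0 != 0 /\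
     forall x : P1 F, mu (Gmap b) x = mobius a0 b0 c0 d0 x).
Proof.
move=> HF _; split; first by move=> x; exact: (@part1 F HF (size b) b (erefl _) x).
exact: (@part2 F (Gmap b)).
Qed.
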